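(* Let $G$ be a proper interval graph and $<$ a proper vertex ordering of it. Let $M=\{e_1,e_2,\ldots,e_t\}$ be a matching in $G$ where $l(e_1)<l(e_2)<\cdots<l(e_t)$. Then $M$ is uniquely restricted in $G$ if and only if $\{e_i,e_{i+1}\}$ is a uniquely restricted matching in $G$ for each $i\in\{1,2,\ldots,t-1\}$.
   Context: Graphs are finite, simple, undirected. A proper interval graph is a graph with an interval representation (closed real intervals, adjacency iff intersection for distinct vertices) in which no interval strictly contains another. An ordering $<$ of $V(G)$ is a proper vertex ordering if for all $u<v<w$, $uw\in E(G)$ implies $uv,vw\in E(G)$. For an edge $e=uv$, $l(e)=\min_<\{u,v\}$ and $r(e)=\max_<\{u,v\}$. A matching is a set of pairwise vertex-disjoint edges; it is uniquely restricted if no other matching of $G$ matches exactly the same vertex set. *)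

(* Defs.v *)
From Stdlib Require Import Reals.
From mathcomp Require Import all_boot.
Set Implicit Arguments. Unset Strict Implicit. Unset Printing Implicit Defensive.

Definition simple_graph (T : finType) (E : rel T) : Prop :=
  (forall u v, E u v = E v u) /\ (forall u, ~~ E u u).

Definition proper_interval_rep (T : finType) (E : rel T) (a b : T -> R) : Prop :=
  (forall v, Rle (a v) (b v)) /\
  (forall u v, u != v ->
     (E u v <-> Rle (Rmax (a u) (a v)) (Rmin (b u) (b v)))) /\
  (forall u v, ~ (Rle (a u) (a v) /\ Rle (b v) (b u) /\
                  (a u <> a v \/ b u <> b v))).

Definition proper_interval_graph (T : finType) (E : rel T) : Prop :=
  simple_graph E /\ exists a b : T -> R, proper_interval_rep E a b.

(* A linear ordering of V(G) is encoded by an injective map ord : T -> nat,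
   u < v iff ord u < ord v. *)
Definition proper_vertex_ordering (T : finType) (E : rel T) (ord : T -> nat) : Prop :=
  injective ord /\
  (forall u v w, (ord u < ord v)%N -> (ord v < ord w)%N -> E u w -> E u v /\ E v w).

Definition is_edge (T : finType) (E : rel T) (X : {set T}) : bool :=
  [exists u, exists v, (X == [set u; v]) && E u v].

Definition matching (T : finType) (E : rel T) (M : {set {set T}}) : bool :=
  [forall X in M, is_edge E X] &&
  [forall X in M, forall Y in M, (X != Y) ==> [disjoint X & Y]].

Definition uniquely_restricted (T : finType) (E : rel T) (M : {set {set T}}) : Prop :=
  matching E M /\
  forall M' : {set {set T}}, matching E M' -> cover M' = cover M -> M' = M.

(* l(e) < l(f) w.r.t. ord, i.e. the smaller endpoint of e precedes
   the smaller endpoint of f. *)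
Definition l_lt (T : finType) (ord : T -> nat) (e f : {set T}) : bool :=
  [exists u in e, forall v in f, (ord u < ord v)%N].

(* Main.v *)
Require Import Defs.
From Stdlib Require Import Reals.
From mathcomp Require Import all_boot.
From mathcomp Require Import zify.
Set Implicit Arguments. Unset Strict Implicit. Unset Printing Implicit Defensive.

Lemma ord_neq (T : finType) (ord : T -> nat) (x y : T) :
  injective ord -> x <> y -> ord x <> ord y.
Proof. by move=> Hinj Hxy /Hinj. Qed.

Lemma edge_nf (T : finType) (E : rel T) (ord : T -> nat) (X : {set T}) :
  simple_graph E -> injective ord -> is_edge E X ->
  exists a b, [/\ X = [set a; b], (ord a < ord b)%N & E a b].
Proof.
move=> [Hs Hi] Hinj /existsP [u /existsP [v /andP [/eqP -> Huv]]].
have Hne : u <> v by move=> e; move: Huv; rewrite e (negbTE (Hi v)).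
have := ord_neq Hinj Hne => Ho.
case: (ltngtP (ord u) (ord v)) => H.
- by exists u, v.
- by exists v, u; rewrite setUC Hs.
- by exfalso.
Qed.

Lemma edge_at (T : finType) (E : rel T) (X : {set T}) (w : T) :
  simple_graph E -> is_edge E X -> w \in X ->
  exists p, X = [set w; p] /\ E w p.
Proof.
move=> [Hs Hi] /existsP [u /existsP [v /andP [/eqP -> Huv]]] /set2P [->|->].
- by exists v.
- by exists u; rewrite setUC Hs.
Qed.

Lemma match_edge (T : finType) (E : rel T) (M : {set {set T}}) X :
  matching E M -> X \in M -> is_edge E X.
Proof. by move=> /andP [/forall_inP H _] /H. Qed.

Lemma match_dj (T : finType) (E : rel T) (M : {set {set T}}) X Y v :
  matching E M -> X \in M -> Y \in M -> v \in X -> v \in Y -> X = Y.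
Proof.
move=> /andP [_ /forall_inP H] HX HY vX vY.
apply/eqP; apply: contraT => Hne.
move: (H X HX) => /forall_inP /(_ Y HY) /implyP /(_ Hne) Hd.
by rewrite (disjointFr Hd vX) in vY.
Qed.

Lemma match_dj' (T : finType) (E : rel T) (M : {set {set T}}) X Y u v :
  matching E M -> X \in M -> Y \in M -> X <> Y -> u \in X -> v \in Y -> u <> v.
Proof. move=> HM HX HY Hne uX vY e; subst; exact: Hne (match_dj HM HX HY uX vY). Qed.

Lemma prop_le (T : finType) (E : rel T) (ord : T -> nat) u v w :
  proper_vertex_ordering E ord ->
  (ord u < ord v)%N -> (ord v <= ord w)%N -> E u w -> E u v.
Proof.
move=> [Hinj Hp] H1 H2 Huw.
case: (ltngtP (ord v) (ord w)) H2 => // H _.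
- by case: (Hp _ _ _ H1 H Huw).
- by rewrite (Hinj _ _ H).
Qed.

Lemma prop_ge (T : finType) (E : rel T) (ord : T -> nat) u v w :
  proper_vertex_ordering E ord ->
  (ord u <= ord v)%N -> (ord v < ord w)%N -> E u w -> E v w.
Proof.
move=> [Hinj Hp] H1 H2 Huw.
case: (ltngtP (ord u) (ord v)) H1 => // H _.
- by case: (Hp _ _ _ H H2 Huw).
- by rewrite -(Hinj _ _ H).
Qed.

Lemma overlap (T : finType) (E : rel T) (ord : T -> nat) a b c d :
  simple_graph E -> proper_vertex_ordering E ord ->
  (ord a < ord b)%N -> (ord c < ord d)%N -> E a b -> E c d ->
  (ord a < ord c)%N -> (ord c < ord b)%N -> b <> d -> E a c /\ E b d.
Proof.
move=> [Hs Hi] [Hinj Hp] Hab Hcd Eab Ecd H1 H2 Hbd.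
have Ho := ord_neq Hinj Hbd.
split; first by case: (Hp _ _ _ H1 H2 Eab).
case: (ltngtP (ord b) (ord d)) => H.
- by case: (Hp _ _ _ H2 H Ecd).
- by case: (Hp _ _ _ (ltn_trans H1 Hcd) H Eab) => _; rewrite Hs.
- by exfalso.
Qed.

Definition P (T : finType) (E : rel T) (ord : T -> nat) (e f : {set T}) :=
  exists a b c d, [/\ e = [set a; b], f = [set c; d], (ord a < ord b)%N &
     (ord c < ord d)%N] /\ [/\ E a b, E c d, E a c & E b d].

Lemma P_sym (T : finType) (E : rel T) (ord : T -> nat) e f :
  simple_graph E -> P E ord e f -> P E ord f e.
Proof.
move=> [Hs _] [a [b [c [d [[-> -> H1 H2] [H5 H6 H3 H4]]]]]].
by exists c, d, a, b; split; split => //; rewrite Hs.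
Qed.

Lemma llt (T : finType) (ord : T -> nat) a b c d :
  l_lt ord [set a; b] [set c; d] -> (ord a < ord b)%N -> (ord a < ord c)%N.
Proof.
move=> /existsP [u /andP [/set2P Hu /forall_inP H]] Hab.
have := H c (set21 _ _); case: Hu => -> ; lia.
Qed.

Lemma llt_trans (T : finType) (ord : T -> nat) : transitive (l_lt ord).
Proof.
move=> f e g /existsP [u /andP [Hu /forall_inP H1]] /existsP [w /andP [Hw /forall_inP H2]].
apply/existsP; exists u; rewrite Hu /=; apply/forall_inP => v Hv.
exact: ltn_trans (H1 _ Hw) (H2 _ Hv).
Qed.

Lemma stepA (T : finType) (E : rel T) (ord : T -> nat) e f g a' b' :
  simple_graph E -> proper_vertex_ordering E ord ->
  f = [set a'; b'] -> (ord a' < ord b')%N -> E a' b' ->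
  l_lt ord e f -> l_lt ord f g ->
  (forall v, v \in f -> v \in e -> False) ->
  (forall v, v \in f -> v \in g -> False) ->
  P E ord e g -> P E ord e f \/ P E ord f g.
Proof.
move=> Hsg Hpo Hf Hab' Eab' Hef Hfg Hde Hdg [a [b [c [d [[He Hg Hab Hcd] [Eab Ecd Eac Ebd]]]]]].
have [Hinj _] := Hpo.
have H1 : (ord a < ord a')%N by move: Hef; rewrite He Hf => /llt; apply.
have H2 : (ord a' < ord c)%N by move: Hfg; rewrite Hg Hf => /llt; apply.
have Eaa' : E a a' by apply: (prop_le Hpo H1 (ltnW H2) Eac).
have dif : forall x y, x \in f -> y \in e -> ord x <> ord y.
  by move=> x y Hx Hy /Hinj exy; subst; exact: Hde Hx Hy.
have dig : forall x y, x \in f -> y \in g -> ord x <> ord y.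
  by move=> x y Hx Hy /Hinj exy; subst; exact: Hdg Hx Hy.
have fa : a' \in f by rewrite Hf set21.
have fb : b' \in f by rewrite Hf set22.
have eb : b \in e by rewrite He set22.
have gc : c \in g by rewrite Hg set21.
have gd : d \in g by rewrite Hg set22.
have n1 := dif _ _ fa eb; have n2 := dif _ _ fb eb; have n3 := dig _ _ fb gc.
have n4 := dig _ _ fb gd.
case: (ltngtP (ord a') (ord b)) => Hc; last by case: (n1 Hc).
- left; exists a, b, a', b'; split => //; split => //.
  have [_ ] := overlap Hsg Hpo Hab Hab' Eab Eab' H1 Hc (fun e => n2 (congr1 ord (esym e))).
  done.
- case: (ltngtP (ord c) (ord b')) => Hc2; last by case: (n3 (esym Hc2)).
  + right; exists a', b', c, d; split => //.
    apply/and4P; have [-> ->] := overlap Hsg Hpo Hab' Hcd Eab' Ecd H2 Hc2 (fun e => n4 (congr1 ord e)).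
    by rewrite Eab' Ecd.
  + left; exists a, b, a', b'; split => //; split => //.
    have h1 : (ord b < ord b')%N by exact: ltn_trans Hc Hab'.
    have h2 : (ord b' <= ord d)%N by exact: ltnW (ltn_trans Hc2 Hcd).
    exact: (prop_le Hpo h1 h2 Ebd).
Qed.

Lemma partA (T : finType) (E : rel T) (ord : T -> nat) (s : seq {set T}) :
  simple_graph E -> proper_vertex_ordering E ord ->
  matching E [set X in s] -> sorted (l_lt ord) s ->
  forall i j, (i < j)%N -> (j < size s)%N ->
  P E ord (nth set0 s i) (nth set0 s j) ->
  exists k, (k.+1 < size s)%N /\ P E ord (nth set0 s k) (nth set0 s k.+1).
Proof.
move=> Hsg Hpo HM Hsort.
have [Hinj _] := Hpo.
have inM : forall i, (i < size s)%N -> nth set0 s i \in [set X in s].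
  by move=> i Hi; rewrite inE mem_nth.
have Hlt : forall i j, (i < j)%N -> (j < size s)%N -> l_lt ord (nth set0 s i) (nth set0 s j).
  move=> i j Hij Hj; apply: (sorted_ltn_nth (@llt_trans T ord)) => //; rewrite inE //.
  exact: ltn_trans Hij Hj.
have Hne : forall i j, (i < j)%N -> (j < size s)%N -> nth set0 s i <> nth set0 s j.
  move=> i j Hij Hj e.
  have := Hlt i j Hij Hj; rewrite e.
  have [a [b [He Hab _]]] := edge_nf Hsg Hinj (match_edge HM (inM j Hj)).
  rewrite He => /llt /(_ Hab); by rewrite ltnn.
have Hdj : forall i j, (i < j)%N -> (j < size s)%N -> forall v,
    v \in nth set0 s i -> v \in nth set0 s j -> False.
  move=> i j Hij Hj v H1 H2; apply: (Hne i j Hij Hj).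
  exact: match_dj HM (inM i (ltn_trans Hij Hj)) (inM j Hj) H1 H2.
suff: forall d i, (i + d.+1 < size s)%N -> P E ord (nth set0 s i) (nth set0 s (i + d.+1)) ->
  exists k, (k.+1 < size s)%N /\ P E ord (nth set0 s k) (nth set0 s k.+1).
  move=> H i j Hij Hj; have -> : j = i + (j - i).-1.+1 by lia.
  apply: H; lia.
elim=> [|d IH] i Hsz HP.
  by exists i; rewrite addn1 in Hsz HP.
have [a [b [He Hab Eab]]] := edge_nf Hsg Hinj (match_edge HM (inM i.+1 (ltac:(lia)))).
have := stepA Hsg Hpo He Hab Eab (Hlt i i.+1 (ltnSn i) ltac:(lia))
  (Hlt i.+1 (i + d.+2) ltac:(lia) Hsz).
move=> /(_ (fun v h1 h2 => Hdj i i.+1 (ltnSn i) ltac:(lia) v h2 h1)).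
move=> /(_ (fun v h1 h2 => Hdj i.+1 (i + d.+2) ltac:(lia) Hsz v h1 h2)).
case/(_ HP) => [H|H].
  by exists i; split => //; lia.
apply: (IH i.+1); first lia.
by rewrite addSnnS.
Qed.

Lemma pick_min (T : finType) (E : rel T) (ord : T -> nat) (D : {set {set T}}) v0 :
  simple_graph E -> injective ord -> (forall e, e \in D -> is_edge E e) ->
  v0 \in cover D ->
  exists e a b, [/\ e \in D, e = [set a; b], (ord a < ord b)%N, E a b &
                 forall v, v \in cover D -> (ord a <= ord v)%N].
Proof.
move=> Hsg Hinj HD Hv0.
case: (arg_minnP ord Hv0) => x Hx Hmin.
move: (Hx); rewrite /cover => /bigcupP [e HeD xe].
have [a [b [He Hab Eab]]] := edge_nf Hsg Hinj (HD e HeD).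
exists e, a, b; split => // v Hv.
apply: leq_trans (Hmin v Hv).
by move: xe; rewrite He => /set2P [->|->] //; apply: ltnW.
Qed.

Lemma in_cover (T : finType) (M : {set {set T}}) X v :
  X \in M -> v \in X -> v \in cover M.
Proof. by move=> HX Hv; apply/bigcupP; exists X. Qed.

Lemma cover_in (T : finType) (M : {set {set T}}) v :
  v \in cover M -> exists2 X, X \in M & v \in X.
Proof. by move/bigcupP. Qed.

Lemma partB (T : finType) (E : rel T) (ord : T -> nat) (M M' : {set {set T}}) e0 :
  simple_graph E -> proper_vertex_ordering E ord ->
  matching E M -> matching E M' -> cover M' = cover M ->
  e0 \in M -> e0 \notin M' ->
  exists e f, [/\ e \in M, f \in M, e <> f & P E ord e f].
Proof.
move=> Hsg Hpo HM HM' Hcov He0 He0'.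
have [Hinj _] := Hpo; have [Hs Hi] := Hsg.
set D := M :\: M'.
have DM : forall e, e \in D -> e \in M /\ e \notin M'.
  by move=> e; rewrite in_setD => /andP [].
have DE : forall e, e \in D -> is_edge E e.
  by move=> e /DM [H _]; exact: match_edge HM H.
have [a0 [b0 [He0e _ _]]] := edge_nf Hsg Hinj (match_edge HM He0).
have a0D : a0 \in cover D.
  by apply: (in_cover (X := e0)); rewrite ?in_setD ?He0 ?He0' // He0e set21.
have [e1 [a1 [b1 [He1D He1 Hab1 Eab1 Hmin1]]]] := pick_min Hsg Hinj DE a0D.
have [He1M He1M'] := DM _ He1D.
have a1e : a1 \in e1 by rewrite He1 set21.
have b1e : b1 \in e1 by rewrite He1 set22.
have a1M' : a1 \in cover M' by rewrite Hcov; exact: in_cover He1M a1e.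
have b1M' : b1 \in cover M' by rewrite Hcov; exact: in_cover He1M b1e.
have [X1 HX1 a1X1] := cover_in a1M'.
have [X2 HX2 b1X2] := cover_in b1M'.
have [p [HX1p Eap]] := edge_at Hsg (match_edge HM' HX1) a1X1.
have [q [HX2q Ebq]] := edge_at Hsg (match_edge HM' HX2) b1X2.
set D2 := D :\ e1.
have L : forall w v X', w \in e1 -> X' \in M' -> X' = [set w; v] -> v \notin e1 ->
    v \in cover D2.
  move=> w v X' we HX' HX'e ve.
  have : v \in cover M by rewrite -Hcov; apply: (in_cover HX'); rewrite HX'e set22.
  move=> /cover_in [g HgM vg].
  apply: (in_cover (X := g)) => //.
  rewrite !in_setD1 !in_setD HgM andbT.
  apply/andP; split.
    by apply/eqP => ge; move: ve; rewrite -ge vg.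
  apply/negP => gM'.
  have gX := match_dj HM' gM' HX' vg (ltac:(by rewrite HX'e set22)).
  have : g = e1 by apply: (match_dj HM HgM He1M _ we); rewrite gX HX'e set21.
  by move=> ge; move: ve; rewrite -ge vg.
have pe : p \notin e1.
  rewrite He1; apply/set2P => [[pa|pb]].
    by move: Eap; rewrite pa (negbTE (Hi a1)).
  by move: He1M'; rewrite He1 -pb -HX1p HX1.
have qe : q \notin e1.
  rewrite He1; apply/set2P => [[qa|qb]].
    by move: He1M'; rewrite He1 -qa setUC -HX2q HX2.
  by move: Ebq; rewrite qb (negbTE (Hi b1)).
have pD2 := L _ _ _ a1e HX1 HX1p pe.
have qD2 := L _ _ _ b1e HX2 HX2q qe.
have pq : p <> q.
  move=> epq.
  have X12 : X1 = X2 by apply: (match_dj HM' HX1 HX2 (v := p)); rewrite ?HX1p ?HX2q ?epq set22.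
  move: b1X2; rewrite -X12 HX1p => /set2P [ba|bp].
    by move: Hab1; rewrite ba ltnn.
  by move: pe; rewrite -bp b1e.
have D2D : forall e, e \in D2 -> e \in D /\ e <> e1.
  by move=> e; rewrite in_setD1 => /andP [/eqP ? ?].
have D2E : forall e, e \in D2 -> is_edge E e.
  by move=> e /D2D [/DE ? _].
have [e2 [c [d [He2D2 He2 Hcd Ecd Hmin2]]]] := pick_min Hsg Hinj D2E pD2.
have [He2D He21] := D2D _ He2D2.
have [He2M _] := DM _ He2D.
have ce : c \in e2 by rewrite He2 set21.
have de : d \in e2 by rewrite He2 set22.
have nd : forall x y, x \in e1 -> y \in e2 -> ord x <> ord y.
  move=> x y Hx Hy /Hinj exy; subst y.
  by apply: He21; apply: (match_dj HM He2M He1M Hy Hx).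
have Hac : (ord a1 < ord c)%N.
  rewrite ltn_neqAle Hmin1 ?(in_cover He2D ce) // andbT; apply/eqP; exact: nd _ _ a1e ce.
have Hcp := Hmin2 p pD2.
have Hcq := Hmin2 q qD2.
have Lov : forall v, v \in cover D2 -> (ord c < ord v)%N -> (ord v < ord d)%N ->
    exists e f, [/\ e \in M, f \in M, e <> f & P E ord e f].
  move=> v vD2 H1 H2.
  have [h hD2 vh] := cover_in vD2.
  have [hD hne] := D2D _ hD2.
  have [hM _] := DM _ hD.
  have [c3 [d3 [Hh Hcd3 Ecd3]]] := edge_nf Hsg Hinj (DE _ hD).
  have c3h : c3 \in h by rewrite Hh set21.
  have d3h : d3 \in h by rewrite Hh set22.
  have Hcc3 := Hmin2 c3 (in_cover hD2 c3h).
  have c3v : (ord c3 <= ord v)%N.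
    by move: vh; rewrite Hh => /set2P [->|->] //; apply: ltnW.
  have he2 : h <> e2.
    move=> ee; move: vh; rewrite ee He2 => /set2P [vc|vd].
      by move: H1; rewrite vc ltnn.
    by move: H2; rewrite vd ltnn.
  have nd2 : forall x y, x \in e2 -> y \in h -> ord x <> ord y.
    move=> x y Hx Hy /Hinj exy; subst y.
    by apply: he2; apply: (match_dj HM hM He2M Hy Hx).
  have := nd2 _ _ ce c3h => n1.
  have := nd2 _ _ de d3h => n2.
  have o1 : (ord c < ord c3)%N by rewrite ltn_neqAle Hcc3 andbT; apply/eqP.
  have o2 : (ord c3 < ord d)%N by exact: leq_ltn_trans c3v H2.
  have [E1 E2] := overlap Hsg Hpo Hcd Hcd3 Ecd Ecd3 o1 o2
     (fun e => n2 (congr1 ord e)).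
  exists e2, h; split => //; first by move=> ee; apply: he2.
  by exists c, d, c3, d3; split; split.
have Pe12 : forall (Ead : E a1 c) (Ebd : E b1 d),
    exists e f, [/\ e \in M, f \in M, e <> f & P E ord e f].
  move=> Ead Ebd; exists e1, e2; split => //; first by move=> ee; apply: He21.
  by exists a1, b1, c, d; split; split.
have n1 := nd _ _ b1e ce.
have n2 := nd _ _ b1e de.
have n3 := nd _ _ a1e de.
case: (ltngtP (ord c) (ord b1)) => Hcb; last by case: (n1 (esym Hcb)).
  have [E1 E2] := overlap Hsg Hpo Hab1 Hcd Eab1 Ecd Hac Hcb (fun e => n2 (congr1 ord e)).
  exact: Pe12.
have Eac : E a1 c by apply: (prop_le Hpo Hac Hcp Eap).
case: (leqP (ord d) (ord q)) => Hdq.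
  apply: Pe12 => //; exact: (prop_le Hpo (ltn_trans Hcb Hcd) Hdq Ebq).
case: (eqVneq q c) => [qc|qc].
  have pc : p <> c by move=> e; apply: pq; rewrite e qc.
  have Hcp' : (ord c < ord p)%N.
    by rewrite ltn_neqAle Hcp andbT; apply/eqP => e; apply: (ord_neq Hinj pc).
  case: (ltnP (ord p) (ord d)) => Hpd.
    exact: Lov pD2 Hcp' Hpd.
  have Ead : E a1 d by exact: (prop_le Hpo (ltn_trans Hac Hcd) Hpd Eap).
  apply: Pe12 => //; exact: (prop_ge Hpo (ltnW Hab1) (ltn_trans Hcb Hcd) Ead).
have Hcq' : (ord c < ord q)%N.
  rewrite ltn_neqAle Hcq andbT; apply/eqP => e; move/eqP: qc; apply; exact: Hinj (esym e).
exact: Lov qD2 Hcq' Hdq.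
Qed.

Lemma match_intro (T : finType) (E : rel T) (M : {set {set T}}) :
  (forall X, X \in M -> is_edge E X) ->
  (forall X Y v, X \in M -> Y \in M -> v \in X -> v \in Y -> X = Y) ->
  matching E M.
Proof.
move=> H1 H2; apply/andP; split; first by apply/forall_inP.
apply/forall_inP => X HX; apply/forall_inP => Y HY; apply/implyP => Hne.
rewrite disjoint_subset; apply/subsetP => v vX; rewrite inE; apply/negP => vY.
by move: Hne; rewrite (H2 _ _ _ HX HY vX vY) eqxx.
Qed.

Lemma edge_mem (T : finType) (E : rel T) X : is_edge E X -> exists v, v \in X.
Proof. by move=> /existsP [u /existsP [v /andP [/eqP -> _]]]; exists u; rewrite set21. Qed.

Lemma ur_sub (T : finType) (E : rel T) (M N : {set {set T}}) :
  uniquely_restricted E M -> N \subset M -> uniquely_restricted E N.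
Proof.
move=> [HM HU] /subsetP HNM.
have HN : matching E N.
  apply: match_intro => [X /HNM|X Y v /HNM HX /HNM HY]; first exact: match_edge HM.
  exact: match_dj HM HX HY.
split => // N' HN' Hcov.
set M2 := N' :|: (M :\: N).
have inCN : forall v, v \in cover N' -> exists2 Z, Z \in N & v \in Z.
  by move=> v; rewrite Hcov => /cover_in.
have HM2 : matching E M2.
  apply: match_intro.
    move=> X; rewrite in_setU in_setD => /orP [/(match_edge HN') //|/andP [_ /(match_edge HM)] //].
  have key : forall X Y v, X \in N' -> Y \in M -> Y \notin N -> v \in X -> v \in Y -> False.
    move=> X Y v HX HY HYN vX vY.
    have [Z HZ vZ] := inCN v (in_cover HX vX).
    by move: HYN; rewrite (match_dj HM HY (HNM _ HZ) vY vZ) HZ.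
  move=> X Y v; rewrite !in_setU !in_setD => /orP [HX|/andP [HXN HX]] /orP [HY|/andP [HYN HY]] vX vY.
  - exact: match_dj HN' HX HY vX vY.
  - by case: (key _ _ _ HX HY HYN vX vY).
  - by case: (key _ _ _ HY HX HXN vY vX).
  - exact: match_dj HM HX HY vX vY.
have HcovM2 : cover M2 = cover M.
  apply/setP => v; apply/idP/idP.
    move=> /cover_in [X]; rewrite in_setU in_setD => /orP [HX|/andP [_ HX]] vX.
      have [Z HZ vZ] := inCN v (in_cover HX vX).
      exact: in_cover (HNM _ HZ) vZ.
    exact: in_cover HX vX.
  move=> /cover_in [X HX vX].
  case: (boolP (X \in N)) => HXN.
    have : v \in cover N' by rewrite Hcov; exact: in_cover HXN vX.
    move=> /cover_in [Z HZ vZ]; apply: (in_cover (X := Z)) => //.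
    by rewrite in_setU HZ.
  by apply: (in_cover (X := X)) => //; rewrite in_setU in_setD HXN HX orbT.
have EM := HU _ HM2 HcovM2.
apply/setP => X; apply/idP/idP => HX.
  have : X \in M by rewrite -EM in_setU HX.
  move=> HXM.
  have [v vX] := edge_mem (match_edge HN' HX).
  have [Z HZ vZ] := inCN v (in_cover HX vX).
  by rewrite (match_dj HM HXM (HNM _ HZ) vX vZ).
have : X \in M2 by rewrite EM HNM.
by rewrite in_setU in_setD HX /= orbF.
Qed.

Lemma cover2 (T : finType) (X Y : {set T}) : cover [set X; Y] = X :|: Y.
Proof.
apply/setP => v; apply/bigcupP/setUP => [[Z /set2P [->|->] H]|[H|H]].
- by left.
- by right.
- by exists X; rewrite ?set21.
- by exists Y; rewrite ?set22.
Qed.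

Lemma pair_nonUR (T : finType) (E : rel T) (ord : T -> nat) (M : {set {set T}}) e f :
  matching E M -> e \in M -> f \in M -> e <> f -> P E ord e f ->
  ~ uniquely_restricted E [set e; f].
Proof.
move=> HM He Hf Hne [a [b [c [d [[He' Hf' Hab Hcd] [Eab Ecd Eac Ebd]]]]]] [_ HU].
have ae : a \in e by rewrite He' set21.
have be : b \in e by rewrite He' set22.
have cf : c \in f by rewrite Hf' set21.
have df : d \in f by rewrite Hf' set22.
have dj : forall x y, x \in e -> y \in f -> x <> y.
  by move=> x y Hx Hy exy; subst; apply: Hne; exact: match_dj HM He Hf Hx Hy.
have ab : a <> b by move=> e0; move: Hab; rewrite e0 ltnn.
have cd : c <> d by move=> e0; move: Hcd; rewrite e0 ltnn.
have Hac_bd : forall v, v \in [set a; c] -> v \in [set b; d] -> False.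
  move=> v /set2P [->|->] /set2P [|].
  - exact: ab.
  - exact: dj ae df.
  - by move=> e0; apply: (dj _ _ be cf); rewrite e0.
  - exact: cd.
have HM2 : matching E [set [set a; c]; [set b; d]].
  apply: match_intro.
    move=> X /set2P [->|->]; apply/existsP.
      by exists a; apply/existsP; exists c; rewrite eqxx Eac.
    by exists b; apply/existsP; exists d; rewrite eqxx Ebd.
  move=> X Y v /set2P [->|->] /set2P [->|->] // vX vY.
    by case: (Hac_bd v vX vY).
  by case: (Hac_bd v vY vX).
have Hcov : cover [set [set a; c]; [set b; d]] = cover [set e; f].
  rewrite !cover2 He' Hf'; apply/setP => v; rewrite !inE.
  by do 4 case: (_ == _).
have := HU _ HM2 Hcov => Heq.
have : [set a; c] \in [set e; f] by rewrite -Heq set21.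
move=> /set2P [E1|E1].
  by apply: (dj _ _ _ cf (erefl c)); rewrite -E1 set22.
by apply: (dj _ _ ae _ (erefl a)); rewrite -E1 set21.
Qed.

Theorem theorem3 (T : finType) (E : rel T) (ord : T -> nat)
  (s : seq {set T}) :
  proper_interval_graph E ->
  proper_vertex_ordering E ord ->
  matching E [set X in s] ->
  sorted (l_lt ord) s ->
  (uniquely_restricted E [set X in s] <->
   forall i : nat, (i.+1 < size s)%N ->
     uniquely_restricted E [set nth set0 s i; nth set0 s i.+1]).
Proof.
move=> [Hsg _] Hpo HM Hsort.
have inM : forall i, (i < size s)%N -> nth set0 s i \in [set X in s].
  by move=> i Hi; rewrite inE mem_nth.
split.
  move=> HU i Hi; apply: (ur_sub HU); apply/subsetP => X /set2P [->|->]; apply: inM => //.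
  exact: ltnW.
move=> Hcons; split => // M' HM' Hcov.
case: (eqVneq M' [set X in s]) => // Hne.
exfalso.
have [e0 He0 He0'] : exists2 e0, e0 \in [set X in s] & e0 \notin M'.
  apply/subsetPn; apply/negP => Hsub; apply: (negP Hne); apply/eqP.
  apply/setP => X; apply/idP/idP => HX; last exact: (subsetP Hsub).
  have [v vX] := edge_mem (match_edge HM' HX).
  have : v \in cover [set X in s] by rewrite -Hcov; exact: in_cover HX vX.
  move=> /cover_in [Z HZ vZ].
  by rewrite (match_dj HM' HX (subsetP Hsub _ HZ) vX vZ).
have [e [f [He Hf Hef HP]]] := partB Hsg Hpo HM HM' Hcov He0 He0'.
move: (He) (Hf); rewrite !inE => es fs.
have ei := nth_index set0 es; have fi := nth_index set0 fs.
have eis : (index e s < size s)%N by rewrite index_mem.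
have fis : (index f s < size s)%N by rewrite index_mem.
have [k [Hk HPk]] : exists k, (k.+1 < size s)%N /\ P E ord (nth set0 s k) (nth set0 s k.+1).
  case: (ltngtP (index e s) (index f s)) => Hc.
  - by apply: (partA Hsg Hpo HM Hsort Hc fis); rewrite ei fi.
  - by apply: (partA Hsg Hpo HM Hsort Hc eis); rewrite ei fi; apply: P_sym.
  - by case: Hef; rewrite -ei -fi Hc.
apply: (pair_nonUR HM (inM _ (ltnW Hk)) (inM _ Hk) _ HPk (Hcons k Hk)).
move=> Heq.
have [Hinj _] := Hpo.
have [a [b [Hab' Hab _]]] := edge_nf Hsg Hinj (match_edge HM (inM _ Hk)).
have := @sorted_ltn_nth _ _ (@llt_trans T ord) set0 s Hsort k k.+1.
rewrite !inE (ltnW Hk) Hk ltnSn Heq Hab' => /(_ isT isT isT) /llt /(_ Hab).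
by rewrite ltnn.
Qed.
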